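(* Let $\mathcal{K}$ be a set of finite subsets of $\mathcal{G}$ satisfying (K$_{\supseteq}^{\mathrm{fin}}$) and (K$_{\mathrm{AddPair}}$). Then $\mathcal{K}$ satisfies (K$_{\mathrm{Add}}$): if $A_1,\ldots,A_n\in\mathcal{K}$ and for each $\langle g_1,\ldots,g_n\rangle\in A_1\times\cdots\times A_n$, $f_{\langle g_1,\ldots,g_n\rangle}$ is some member of $\mathrm{posi}(\{g_1,\ldots,g_n\})$, then $\{f_{\langle g_1,\ldots,g_n\rangle}:\langle g_1,\ldots,g_n\rangle\in A_1\times\cdots\times A_n\}\in\mathcal{K}$.
   Context: $\Omega$ is a non-empty set and $\mathcal{G}$ is the set of bounded functions $\Omega\to\mathbb{R}$. $\mathrm{posi}(B)=\{\sum_{i=1}^m\lambda_i h_i: m\geq1,\lambda_i>0,h_i\in B\}$. Here all gamble sets are finite. (K$_{\supseteq}^{\mathrm{fin}}$): if $A\in\mathcal{K}$ and $B\supseteq A$ is a finite subset of $\mathcal{G}$, then $B\in\mathcal{K}$. (K$_{\mathrm{AddPair}}$): if $A_1,A_2\in\mathcal{K}$ and for each pair $g_1\in A_1,g_2\in A_2$, $f_{\langle g_1,g_2\rangle}$ is some member of $\mathrm{posi}(\{g_1,g_2\})$, then $\{f_{\langle g_1,g_2\rangle}: g_1\in A_1,g_2\in A_2\}\in\mathcal{K}$. *)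

(* Defs.v *)
From Stdlib Require Import Reals List.
Import ListNotations.
Open Scope R_scope.

Definition bounded {Omega : Type} (f : Omega -> R) : Prop :=
  exists c : R, forall w, Rabs (f w) <= c.

Definition gamble (Omega : Type) : Type := {f : Omega -> R | bounded f}.

Definition gset (Omega : Type) : Type := gamble Omega -> Prop.

Definition finite_gset {Omega : Type} (A : gset Omega) : Prop :=
  exists l : list (gamble Omega), forall g, A g <-> In g l.

(* posi(B) = { sum_{i=1}^m lambda_i h_i : m >= 1, lambda_i > 0, h_i in B }.
   A positive combination is encoded by a non-empty list of pairs (lambda_i, h_i). *)
Definition posi {Omega : Type} (B : gset Omega) : gset Omega :=
  fun f => exists l : list (R * gamble Omega),
    l <> [] /\
    Forall (fun p => 0 < fst p /\ B (snd p)) l /\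
    forall w, proj1_sig f w =
      fold_right (fun p acc => fst p * proj1_sig (snd p) w + acc) 0 l.

Definition pair_gset {Omega : Type} (g1 g2 : gamble Omega) : gset Omega :=
  fun h => h = g1 \/ h = g2.

Definition list_gset {Omega : Type} (gs : list (gamble Omega)) : gset Omega :=
  fun h => In h gs.

Definition incl_gset {Omega : Type} (A B : gset Omega) : Prop :=
  forall g, A g -> B g.

Definition K_supset_fin {Omega : Type} (K : gset Omega -> Prop) : Prop :=
  forall A B : gset Omega, K A -> finite_gset B -> incl_gset A B -> K B.

(* (K_AddPair): f assigns to each pair (g1,g2) a gamble; only its values on
   A1 x A2 matter. *)
Definition K_AddPair {Omega : Type} (K : gset Omega -> Prop) : Prop :=
  forall (A1 A2 : gset Omega) (f : gamble Omega -> gamble Omega -> gamble Omega),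
    K A1 -> K A2 ->
    (forall g1 g2, A1 g1 -> A2 g2 -> posi (pair_gset g1 g2) (f g1 g2)) ->
    K (fun h => exists g1 g2, A1 g1 /\ A2 g2 /\ h = f g1 g2).

(* (K_Add): the list As = [A_1; ...; A_n]; tuples <g_1,...,g_n> in
   A_1 x ... x A_n are lists gs with Forall2 (fun A g => A g) As gs. *)
Definition K_Add {Omega : Type} (K : gset Omega -> Prop) : Prop :=
  forall (As : list (gset Omega)) (f : list (gamble Omega) -> gamble Omega),
    Forall K As ->
    (forall gs, Forall2 (fun A g => A g) As gs -> posi (list_gset gs) (f gs)) ->
    K (fun h => exists gs, Forall2 (fun A g => A g) As gs /\ h = f gs).

(* Main.v *)
Require Import Defs.
From Stdlib Require Import Reals List Lra.
From Stdlib Require Import Classical ClassicalEpsilon.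
Import ListNotations.
Open Scope R_scope.

Definition pick {A : Type} (P : A -> Prop) (d : A) : A :=
  match excluded_middle_informative (exists x, P x) with
  | left e => proj1_sig (constructive_indefinite_description _ e)
  | right _ => d
  end.

Lemma pick_spec {A : Type} (P : A -> Prop) (d : A) : (exists x, P x) -> P (pick P d).
Proof.
  intro e. unfold pick. destruct (excluded_middle_informative (exists x, P x)) as [e'|n].
  - exact (proj2_sig (constructive_indefinite_description _ e')).
  - contradiction.
Qed.

Definition combf {Omega : Type} (l : list (R * gamble Omega)) (w : Omega) : R :=
  fold_right (fun p acc => fst p * proj1_sig (snd p) w + acc) 0 l.

Lemma comb_bounded {Omega : Type} (l : list (R * gamble Omega)) : Defs.bounded (combf l).
Proof.
  induction l as [|[c [g HB]] l IH].
  - exists 0. intro w. unfold combf; simpl. rewrite Rabs_R0. lra.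
  - destruct HB as [B HB]. destruct IH as [M HM]. exists (Rabs c * B + M). intro w.
    unfold combf; simpl. eapply Rle_trans; [apply Rabs_triang|]. rewrite Rabs_mult.
    apply Rplus_le_compat; [apply Rmult_le_compat_l; [apply Rabs_pos|apply HB]|apply HM].
Qed.

Definition comb {Omega : Type} (l : list (R * gamble Omega)) : gamble Omega :=
  exist _ (combf l) (comb_bounded l).

Definition gdec {Omega : Type} (x y : gamble Omega) : {x = y} + {x <> y} :=
  excluded_middle_informative (x = y).

Definition filterA {Omega : Type} (a : gamble Omega) (l : list (R * gamble Omega)) :=
  filter (fun p => if gdec (snd p) a then false else true) l.

Definition sumA {Omega : Type} (a : gamble Omega) (l : list (R * gamble Omega)) : R :=
  fold_right (fun p acc => (if gdec (snd p) a then fst p else 0) + acc) 0 l.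

Lemma split_comb {Omega : Type} (a : gamble Omega) l w :
  combf l w = sumA a l * proj1_sig a w + combf (filterA a l) w.
Proof.
  induction l as [|p l IH].
  - unfold combf, sumA, filterA; simpl. ring.
  - unfold combf, sumA, filterA in *; simpl. destruct (gdec (snd p) a) as [e|n].
    + simpl. rewrite IH. destruct p as [c g]. simpl in *. subst g. ring.
    + simpl. rewrite IH. ring.
Qed.

Lemma sumA_nonneg {Omega : Type} (a : gamble Omega) l :
  Forall (fun p => 0 < fst p) l -> 0 <= sumA a l.
Proof.
  induction 1 as [|p l Hp Hl IH]; unfold sumA in *; simpl; [lra|].
  destruct (gdec (snd p) a); lra.
Qed.

Lemma sumA_pos {Omega : Type} (a : gamble Omega) l :
  Forall (fun p => 0 < fst p) l -> (exists p, In p l /\ snd p = a) -> 0 < sumA a l.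
Proof.
  induction 1 as [|p l Hp Hl IH]; intros [q [Hq Hqa]]; [destruct Hq|].
  unfold sumA in *; simpl. pose proof (sumA_nonneg a l Hl) as Hn. unfold sumA in Hn.
  destruct Hq as [<-|Hq].
  - destruct (gdec (snd p) a); [lra|contradiction].
  - assert (0 < fold_right (fun p0 acc => (if gdec (snd p0) a then fst p0 else 0) + acc) 0 l)
      by (apply IH; eauto).
    destruct (gdec (snd p) a); lra.
Qed.

Definition mixed {Omega : Type} (l : list (R * gamble Omega)) : Prop :=
  exists p q, In p l /\ In q l /\ snd p <> snd q.

Definition P2 {Omega : Type} (A : gset Omega) (g : gamble Omega) : Prop := A g.

Lemma prod_list {Omega : Type} (As : list (gset Omega)) :
  Forall finite_gset As ->
  exists ll, forall gs, Forall2 (fun A g => A g) As gs <-> In gs ll.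
Proof.
  induction 1 as [|A As [lA HA] _ [ll Hll]].
  - exists [[]]. intro gs. split.
    + intro H. inversion H. left; reflexivity.
    + intros [<-|[]]. constructor.
  - exists (flat_map (fun g => map (cons g) ll) lA). intro gs. split.
    + intro H. inversion H as [|? g ? gs' HAg Hgs']; subst.
      apply in_flat_map. exists g. split; [apply HA; exact HAg|].
      apply in_map. apply Hll. exact Hgs'.
    + intro H. apply in_flat_map in H. destruct H as [g [Hg Hm]].
      apply in_map_iff in Hm. destruct Hm as [gs' [<- Hgs']].
      constructor; [apply HA; exact Hg|apply Hll; exact Hgs'].
Qed.

Lemma finite_img {Omega : Type} (As : list (gset Omega)) (F : list (gamble Omega) -> gamble Omega) :
  Forall finite_gset As ->
  finite_gset (fun h => exists gs, Forall2 (fun A g => A g) As gs /\ h = F gs).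
Proof.
  intro HF. destruct (prod_list As HF) as [ll Hll]. exists (map F ll). intro h. split.
  - intros [gs [Hgs ->]]. apply in_map. apply Hll. exact Hgs.
  - intro H. apply in_map_iff in H. destruct H as [gs [<- Hgs]]. exists gs. split; [apply Hll; exact Hgs|reflexivity].
Qed.

Lemma choose_tuple {Omega : Type} (As : list (gset Omega)) (Q : gamble Omega -> Prop) :
  (forall A, In A As -> exists g, A g /\ Q g) ->
  exists gs, Forall2 (fun A g => A g) As gs /\ Forall Q gs.
Proof.
  induction As as [|A As IH]; intro H.
  - exists []. split; constructor.
  - destruct (H A (or_introl eq_refl)) as [g [Hg Qg]].
    destruct IH as [gs [H1 H2]]. { intros B HB. apply H. right; exact HB. }
    exists (g :: gs). split; constructor; auto.
Qed.

Lemma Forall2_in {Omega : Type} (As : list (gset Omega)) gs g :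
  Forall2 (fun A g => A g) As gs -> In g gs -> exists A, In A As /\ A g.
Proof.
  induction 1 as [|A g' As gs Hg Hr IH]; intro Hin; [destruct Hin|].
  destruct Hin as [<-|Hin].
  - exists A. split; [left; reflexivity|exact Hg].
  - destruct (IH Hin) as [B [HB1 HB2]]. exists B. split; [right; exact HB1|exact HB2].
Qed.

Definition Ustep {Omega : Type} (L : list (gamble Omega) -> list (R * gamble Omega)) a gs : Prop :=
  mixed (L gs) /\ exists p, In p (L gs) /\ snd p = a.

Definition L1f {Omega : Type} (L : list (gamble Omega) -> list (R * gamble Omega)) a gs :=
  if excluded_middle_informative (Ustep L a gs) then [(1, a)] else L gs.

Definition L2f {Omega : Type} (L : list (gamble Omega) -> list (R * gamble Omega)) a gs :=
  if excluded_middle_informative (Ustep L a gs) then filterA a (L gs) else L gs.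

Lemma gen (Omega : Type) (K : gset Omega -> Prop)
  (Kfin : forall A, K A -> finite_gset A)
  (Hsup : K_supset_fin K) (Hpair : K_AddPair K) (H : list (gamble Omega)) :
  forall As L (T : gset Omega),
  Forall K As -> finite_gset T ->
  (forall gs, Forall2 (fun A g => A g) As gs -> L gs <> [] /\
      Forall (fun p => 0 < fst p /\ In (snd p) gs) (L gs)) ->
  (forall gs, Forall2 (fun A g => A g) As gs -> mixed (L gs) ->
      forall p, In p (L gs) -> In (snd p) H) ->
  (forall gs, Forall2 (fun A g => A g) As gs -> exists h, T h /\
      forall w, proj1_sig h w = combf (L gs) w) ->
  K T.
Proof.
  induction H as [|a H IH]; intros As L T HK HT Hc1 Hc2 Hc3.
  -
    assert (Hpure : forall gs, Forall2 (fun A g => A g) As gs ->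
              forall p q, In p (L gs) -> In q (L gs) -> snd p = snd q).
    { intros gs Hgs p q Hp Hq. apply NNPP. intro Hne.
      exact (Hc2 gs Hgs (ex_intro _ p (ex_intro _ q (conj Hp (conj Hq Hne)))) p Hp). }
    set (Good := fun g => exists gs, Forall2 (fun A g => A g) As gs /\
                    exists p, In p (L gs) /\ snd p = g).
    assert (HA : exists A, In A As /\ forall g, A g -> Good g).
    { apply NNPP. intro Hn.
      assert (Hall : forall A, In A As -> exists g, A g /\ ~ Good g).
      { intros A HA. apply NNPP. intro Hn2. apply Hn. exists A. split; [exact HA|].
        intros g Hg. apply NNPP. intro HG. apply Hn2. exists g. auto. }
      destruct (choose_tuple As _ Hall) as [gs [Hgs HQ]].
      destruct (Hc1 gs Hgs) as [Hne HF].
      destruct (L gs) as [|p l] eqn:E; [contradiction|].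
      rewrite Forall_forall in HF, HQ.
      assert (Hin : In p (p :: l)) by (left; reflexivity).
      apply (HQ (snd p) (proj2 (HF p Hin))).
      exists gs. split; [exact Hgs|]. exists p. rewrite E. split; [exact Hin|reflexivity]. }
    destruct HA as [A [HAin HAg]].
    assert (KA : K A) by (rewrite Forall_forall in HK; apply HK; exact HAin).
    set (phi := fun g1 g2 => pick (fun h => T h /\ posi (pair_gset g1 g2) h) g1).
    assert (Hex : forall g1 g2, A g1 -> exists h, T h /\ posi (pair_gset g1 g2) h).
    { intros g1 g2 Hg1. destruct (HAg g1 Hg1) as [gs [Hgs [p [Hp Hpg]]]].
      destruct (Hc3 gs Hgs) as [h [Th Hh]]. exists h. split; [exact Th|].
      destruct (Hc1 gs Hgs) as [Hne HF].
      exists (L gs). split; [exact Hne|]. split; [|exact Hh].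
      rewrite Forall_forall in *. intros q Hq. split; [apply (HF q Hq)|].
      left. rewrite <- Hpg. apply (Hpure gs Hgs q p Hq Hp). }
    assert (KS := Hpair A A phi KA KA
      (fun g1 g2 H1 H2 => proj2 (pick_spec _ g1 (Hex g1 g2 H1)))).
    apply (Hsup _ T KS HT). intros h [g1 [g2 [H1 [H2 ->]]]].
    exact (proj1 (pick_spec _ g1 (Hex g1 g2 H1))).
  -
    assert (HF : Forall finite_gset As).
    { rewrite Forall_forall in *. intros A HA. apply Kfin, HK, HA. }
    set (T1 := fun h => exists gs, Forall2 (fun A g => A g) As gs /\ h = comb (L1f L a gs)).
    set (T2 := fun h => exists gs, Forall2 (fun A g => A g) As gs /\ h = comb (L2f L a gs)).
    assert (K1 : K T1).
    { apply (IH As (L1f L a) T1 HK (finite_img As _ HF)).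
      - intros gs Hgs. unfold L1f. destruct (excluded_middle_informative (Ustep L a gs)) as [Hu|Hu].
        + split; [discriminate|]. constructor; [|constructor]. split; simpl; [lra|].
          destruct Hu as [_ [p [Hp Hpa]]]. destruct (Hc1 gs Hgs) as [_ Hf].
          rewrite Forall_forall in Hf. rewrite <- Hpa. apply (Hf p Hp).
        + apply Hc1, Hgs.
      - intros gs Hgs. unfold L1f. destruct (excluded_middle_informative (Ustep L a gs)) as [Hu|Hu].
        + intros [p [q [Hp [Hq Hne]]]]. destruct Hp as [<-|[]]. destruct Hq as [<-|[]].
          contradiction.
        + intros Hm p Hp. destruct (Hc2 gs Hgs Hm p Hp) as [Ha|Hin]; [|exact Hin].
          exfalso. apply Hu. split; [exact Hm|]. exists p. auto.
      - intros gs Hgs. exists (comb (L1f L a gs)). split; [exists gs; auto|reflexivity]. }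
    assert (K2 : K T2).
    { apply (IH As (L2f L a) T2 HK (finite_img As _ HF)).
      - intros gs Hgs. unfold L2f. destruct (excluded_middle_informative (Ustep L a gs)) as [Hu|Hu].
        + destruct (Hc1 gs Hgs) as [_ Hf]. rewrite Forall_forall in Hf. split.
          * destruct Hu as [[p [q [Hp [Hq Hne]]]] _].
            assert (Hx : exists r, In r (L gs) /\ snd r <> a).
            { destruct (gdec (snd p) a) as [e|n]; [|exists p; auto].
              exists q. split; [exact Hq|]. intro e'. apply Hne. congruence. }
            destruct Hx as [r [Hr Hra]]. intro E.
            assert (In r (filterA a (L gs))).
            { unfold filterA. apply filter_In. split; [exact Hr|].
              destruct (gdec (snd r) a); [contradiction|reflexivity]. }
            rewrite E in H0. destruct H0.
          * rewrite Forall_forall. intros r Hr. unfold filterA in Hr.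
            apply filter_In in Hr. apply Hf, Hr.
        + apply Hc1, Hgs.
      - intros gs Hgs. unfold L2f. destruct (excluded_middle_informative (Ustep L a gs)) as [Hu|Hu].
        + intros _ p Hp. unfold filterA in Hp. apply filter_In in Hp. destruct Hp as [Hp Hpa].
          destruct (Hc2 gs Hgs (proj1 Hu) p Hp) as [Ha|Hin]; [|exact Hin].
          destruct (gdec (snd p) a); [discriminate|]. congruence.
        + intros Hm p Hp. destruct (Hc2 gs Hgs Hm p Hp) as [Ha|Hin]; [|exact Hin].
          exfalso. apply Hu. split; [exact Hm|]. exists p. auto.
      - intros gs Hgs. exists (comb (L2f L a gs)). split; [exists gs; auto|reflexivity]. }
    set (out := fun x y => pick (fun h => T h /\ posi (pair_gset x y) h) x).
    assert (Hex : forall x y, T1 x -> T2 y -> exists h, T h /\ posi (pair_gset x y) h).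
    { intros x y [gs1 [Hg1 ->]] [gs2 [Hg2 ->]].
      unfold L1f. destruct (excluded_middle_informative (Ustep L a gs1)) as [Hu1|Hu1].
      - unfold L2f. destruct (excluded_middle_informative (Ustep L a gs2)) as [Hu2|Hu2].
        + destruct (Hc3 gs2 Hg2) as [h [Th Hh]]. exists h. split; [exact Th|].
          destruct (Hc1 gs2 Hg2) as [_ Hf].
          exists [(sumA a (L gs2), comb [(1, a)]); (1, comb (filterA a (L gs2)))].
          split; [discriminate|]. split.
          * constructor; [|constructor; [|constructor]]; simpl.
            -- split; [|left; reflexivity]. apply sumA_pos; [|exact (proj2 Hu2)].
               rewrite Forall_forall in *. intros q Hq. apply (Hf q Hq).
            -- split; [lra|right; reflexivity].
          * intro w. rewrite Hh, (split_comb a). simpl. unfold combf. simpl. ring.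
        + destruct (Hc3 gs2 Hg2) as [h [Th Hh]]. exists h. split; [exact Th|].
          exists [(1, comb (L gs2))]. split; [discriminate|]. split.
          * constructor; [|constructor]. simpl. split; [lra|right; reflexivity].
          * intro w. rewrite Hh. simpl. ring.
      - destruct (Hc3 gs1 Hg1) as [h [Th Hh]]. exists h. split; [exact Th|].
        exists [(1, comb (L gs1))]. split; [discriminate|]. split.
        * constructor; [|constructor]. simpl. split; [lra|left; reflexivity].
        * intro w. rewrite Hh. simpl. ring. }
    assert (KS := Hpair T1 T2 out K1 K2
      (fun x y H1 H2 => proj2 (pick_spec _ x (Hex x y H1 H2)))).
    apply (Hsup _ T KS HT). intros h [x [y [H1 [H2 ->]]]].
    exact (proj1 (pick_spec _ x (Hex x y H1 H2))).
Qed.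

Lemma allH {Omega : Type} (K : gset Omega -> Prop) (Kfin : forall A, K A -> finite_gset A)
  (As : list (gset Omega)) :
  Forall K As -> exists H, forall A, In A As -> forall g, A g -> In g H.
Proof.
  induction 1 as [|A As HA _ [H IH]].
  - exists []. intros A [].
  - destruct (Kfin A HA) as [l Hl]. exists (l ++ H). intros B [<-|HB] g Hg; apply in_or_app.
    + left. apply Hl, Hg.
    + right. apply (IH B HB g Hg).
Qed.

Theorem mainTheorem5 (Omega : Type) (HOmega : inhabited Omega)
  (K : gset Omega -> Prop)
  (Kfin : forall A, K A -> finite_gset A)
  (Hsup : K_supset_fin K) (Hpair : K_AddPair K) :
  K_Add K.
Proof.
  intros As f HK Hf.
  destruct (allH K Kfin As HK) as [H HH].
  assert (HF : Forall finite_gset As).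
  { rewrite Forall_forall in *. intros A HA. apply Kfin, HK, HA. }
  set (Lf := fun gs => pick (fun l => l <> [] /\
      Forall (fun p => 0 < fst p /\ list_gset gs (snd p)) l /\
      forall w, proj1_sig (f gs) w =
        fold_right (fun p acc => fst p * proj1_sig (snd p) w + acc) 0 l) []).
  assert (Hspec : forall gs, Forall2 (fun A g => A g) As gs -> Lf gs <> [] /\
      Forall (fun p => 0 < fst p /\ list_gset gs (snd p)) (Lf gs) /\
      forall w, proj1_sig (f gs) w =
        fold_right (fun p acc => fst p * proj1_sig (snd p) w + acc) 0 (Lf gs)).
  { intros gs Hgs. apply pick_spec. apply (Hf gs Hgs). }
  apply (gen Omega K Kfin Hsup Hpair H As Lf _ HK (finite_img As f HF)).
  - intros gs Hgs. destruct (Hspec gs Hgs) as [H1 [H2 _]]. split; [exact H1|exact H2].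
  - intros gs Hgs _ p Hp. destruct (Hspec gs Hgs) as [_ [H2 _]].
    rewrite Forall_forall in H2. destruct (H2 p Hp) as [_ Hin].
    destruct (Forall2_in As gs (snd p) Hgs Hin) as [A [HA HAg]].
    exact (HH A HA _ HAg).
  - intros gs Hgs. exists (f gs). split; [exists gs; auto|].
    destruct (Hspec gs Hgs) as [_ [_ H3]]. exact H3.
Qed.
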